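(* Let $(H,L_H)$ be a right-resolving labeled graph presenting $Y=L_H(X_H)$, and let $C$ be a component of $H''$ such that $\beta_H(y)$ is backward asymptotic to $X_C$ for some $y\in Y$. Then $X_C \subseteq \overline{\beta_H(Y)}$ (closure in $X_{H''}$).
   Context: A labeled graph $(H,L_H)$: finite directed graph (vertices $V_H$, edges $E_H$, source/terminal maps $s_H,t_H$) without sinks or sources, labeling $L_H:E_H\to A$, edge shift $X_H$. Right-resolving: distinct edges with the same source have distinct labels. Subset construction $(H'',L_{H''})$: vertices are non-empty subsets of $V_H$; for vertices $F,F'$ and $a\in A$ there is an edge from $F$ to $F'$ labeled $a$ when $F\subseteq\{s_H(e): L_H(e)=a\}$ and $F'=\{t_H(e): s_H(e)\in F, L_H(e)=a\}$; the graph is then trimmed by repeatedly removing sinks and sources. For $y\in Y$ ($L_H^{-1}(y)$ is finite), $\beta_H(y)\in X_{H''}$ is the bi-infinite path whose $i$-th edge is the edge labeled $y_i$ from $F_i$ to $F_{i+1}$, where $F_i=\{s_H(k_i): k\in L_H^{-1}(y)\}$. Components: a vertex is recurrent if there is a path from it to itself; recurrent vertices are equivalent if each reaches the other by a path; an equivalence class $C$ is a component and $X_C$ is the edge shift of the subgraph with vertex set $C$ and edges with both endpoints in $C$. $x\in X_{H''}$ is backward asymptotic to $X_C$ if there exist $u\in X_C$ and $N$ with $x_i=u_i$ for all $i\le N$. *)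

(* Defs.v *)
From HB Require Import structures.
From mathcomp Require Import all_boot all_order all_algebra.
From mathcomp Require Import boolp.
Set Implicit Arguments. Unset Strict Implicit. Unset Printing Implicit Defensive.
Import Order.TTheory GRing.Theory Num.Theory.
Local Open Scope ring_scope.

Section LabeledGraph.
Variables (V E A : finType) (s t : E -> V) (L : E -> A).

Definition no_sinks : Prop := forall v : V, exists e : E, s e = v.
Definition no_sources : Prop := forall v : V, exists e : E, t e = v.
Definition right_resolving : Prop :=
  forall e e' : E, s e = s e' -> L e = L e' -> e = e'.

Definition edge_shift (x : int -> E) : Prop :=
  forall i : int, t (x i) = s (x (i + 1)).

Definition in_Y (y : int -> A) : Prop :=
  exists x, edge_shift x /\ forall i, y i = L (x i).

Definition ssc_edge (F : {set V}) (a : A) (F' : {set V}) : bool :=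
  (F \subset [set s e | e : E & L e == a]) &&
  (F' == [set t e | e : E & (s e \in F) && (L e == a)]).

Definition ssc_step (W : {set {set V}}) : {set {set V}} :=
  [set F in W | [exists a, exists F' in W, ssc_edge F a F'] &&
                [exists a, exists F0 in W, ssc_edge F0 a F]].

(* vertices of H'': non-empty subsets, trimmed by repeatedly removing
   sinks and sources (the vertex set can only shrink #|{set V}| times,
   so this many rounds reach the fixed point) *)
Definition ssc_vertices : {set {set V}} :=
  iter #|{set V}| ssc_step [set F : {set V} | F != set0].

Definition ssc_edgeT := ({set V} * A * {set V})%type.
Definition ssc_src (e : ssc_edgeT) : {set V} := e.1.1.
Definition ssc_lab (e : ssc_edgeT) : A := e.1.2.
Definition ssc_tgt (e : ssc_edgeT) : {set V} := e.2.

Definition ssc_is_edge (e : ssc_edgeT) : bool :=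
  [&& ssc_src e \in ssc_vertices, ssc_tgt e \in ssc_vertices &
      ssc_edge (ssc_src e) (ssc_lab e) (ssc_tgt e)].

Definition X_H2 (x : int -> ssc_edgeT) : Prop :=
  (forall i, ssc_is_edge (x i)) /\
  (forall i : int, ssc_tgt (x i) = ssc_src (x (i + 1))).

Definition F_set (y : int -> A) (i : int) : {set V} :=
  [set v | `[< exists k : int -> E,
               edge_shift k /\ (forall j, L (k j) = y j) /\ s (k i) = v >]].

Definition beta (y : int -> A) : int -> ssc_edgeT :=
  fun i => (F_set y i, y i, F_set y (i + 1)).

Definition beta_image (z : int -> ssc_edgeT) : Prop :=
  exists y, in_Y y /\ forall i, z i = beta y i.

Definition ssc_adj : rel {set V} :=
  fun F F' => [exists a, ssc_is_edge (F, a, F')].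

Definition recurrent (F : {set V}) : bool :=
  [exists F', ssc_adj F F' && connect ssc_adj F' F].

Definition is_component (C : {set {set V}}) : Prop :=
  exists F, recurrent F /\
    C = [set F' | [&& recurrent F', connect ssc_adj F F' & connect ssc_adj F' F]].

Definition X_C (C : {set {set V}}) (x : int -> ssc_edgeT) : Prop :=
  (forall i, [&& ssc_is_edge (x i), ssc_src (x i) \in C & ssc_tgt (x i) \in C]) /\
  (forall i : int, ssc_tgt (x i) = ssc_src (x (i + 1))).

Definition backward_asymptotic (x : int -> ssc_edgeT) (C : {set {set V}}) : Prop :=
  exists u (N : int), X_C C u /\ forall i : int, i <= N -> x i = u i.

(* closure in X_{H''} for the product topology: every central block
   x_[-N, N] of x is matched by some element of S *)
Definition in_closure (S : (int -> ssc_edgeT) -> Prop) (x : int -> ssc_edgeT) : Prop :=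
  X_H2 x /\
  forall N : nat, exists z, S z /\
    forall i : int, - (N%:Z) <= i <= N%:Z -> z i = x i.

End LabeledGraph.

(* Main.v *)
Require Import Defs.
From HB Require Import structures.
From mathcomp Require Import all_boot all_order all_algebra.
From mathcomp Require Import boolp zify.
Set Implicit Arguments. Unset Strict Implicit. Unset Printing Implicit Defensive.
Import Order.TTheory GRing.Theory Num.Theory.
Local Open Scope ring_scope.

Lemma modS_lemma (x : int) (p : nat) : (0 < p)%N ->
  absz ((x + 1) %% p%:Z)%Z = (if (absz (x %% p%:Z)%Z).+1 == p then 0 else (absz (x %% p%:Z)%Z).+1)%N.
Proof.
move=> hp.
have hp0 : p%:Z != 0 by lia.
have e := divz_eq x p%:Z.
have h1 := modz_ge0 x hp0. have h2 := ltz_mod x hp0.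
set m := (x %% p%:Z)%Z in e h1 h2 *.
rewrite {1}e -addrA modzMDl.
case: eqP => h.
- have -> : m + 1 = p%:Z by lia.
  by rewrite modzz.
- rewrite modz_small; lia.
Qed.

Lemma mod_lt (x : int) (p : nat) : (0 < p)%N -> (absz (x %% p%:Z)%Z < p)%N.
Proof. move=> hp. have hp0 : p%:Z != 0 by lia.
have h1 := modz_ge0 x hp0. have h2 := ltz_mod x hp0. lia. Qed.

Lemma mod_shift (r j p : nat) : (r < p)%N ->
  absz ((r%:Z - (j * p)%N%:Z) %% p%:Z)%Z = r.
Proof.
move=> hr.
have -> : r%:Z - (j * p)%N%:Z = (- j%:Z) * p%:Z + r%:Z by rewrite PoszM mulNr addrC.
rewrite modzMDl modz_small; lia.
Qed.

Fixpoint it (T : Type) (phi : T -> option T) (n : nat) (x : T) : option T :=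
  match n with 0 => Some x | n'.+1 => obind (it phi n') (phi x) end.

Lemma it_add (T : Type) (phi : T -> option T) m n x :
  it phi (m + n) x = obind (it phi n) (it phi m x).
Proof.
elim: m x => [|m IH] x //=.
by case: (phi x) => //= z; rewrite IH.
Qed.

Lemma iter_period (T : Type) (phi : T -> option T) q x m :
  it phi q x = Some x -> it phi (q * m) x = Some x.
Proof.
move=> h; elim: m => [|m IH]; first by rewrite muln0.
by rewrite mulnS it_add h /= IH.
Qed.

Lemma periodic_seq (T : finType) (phi : T -> option T) (w : nat -> T) :
  (forall j, phi (w j.+1) = Some (w j)) ->
  exists2 q, (0 < q <= #|T|)%N & it phi q (w 0%N) = Some (w 0%N).
Proof.
move=> hw.
have chain : forall m j, it phi m (w (j + m)%N) = Some (w j).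
  elim=> [|m IH] j; first by rewrite addn0.
  by rewrite /= addnS hw /= IH.
have [/existsP [i /existsP [j /andP [hij /eqP hw']]] | hn] :=
  boolP [exists i : 'I_(#|T|.+1), exists j : 'I_(#|T|.+1), (i < j)%N && (w i == w j)].
- exists (j - i)%N.
    apply/andP; split; first by rewrite subn_gt0.
    have := ltn_ord j; lia.
  have hp : it phi (j - i) (w i) = Some (w i).
    by have := chain (j - i)%N i; rewrite subnKC ?(ltnW hij) // -hw'.
  have h0 : it phi i (w i) = Some (w 0%N) by have := chain (nat_of_ord i) 0%N; rewrite add0n.
  have := it_add phi i (j - i) (w i).
  rewrite h0 /= addnC it_add hp /= h0 => <- //.
- have inj : injective (fun i : 'I_(#|T|.+1) => w i).
    move=> i j e.
    apply/eqP; case: (ltngtP i j) => h.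
    + by move: hn; rewrite negb_exists => /forallP /(_ i); rewrite negb_exists => /forallP /(_ j); rewrite h e eqxx.
    + by move: hn; rewrite negb_exists => /forallP /(_ j); rewrite negb_exists => /forallP /(_ i); rewrite h e eqxx.
    + by apply/eqP; apply: val_inj.
  by have := leq_card _ inj; rewrite card_ord ltnn.
Qed.

Lemma periodic_uniq (T : Type) (phi : T -> option T) x1 x2 z q1 q2 :
  phi x1 = Some z -> phi x2 = Some z -> (0 < q1)%N -> (0 < q2)%N ->
  it phi q1 x1 = Some x1 -> it phi q2 x2 = Some x2 -> x1 = x2.
Proof.
move=> h1 h2 hq1 hq2 p1 p2.
have e1 := iter_period q2 p1. have e2 := iter_period q1 p2.
rewrite mulnC in e2.
have hQ : (0 < q1 * q2)%N by rewrite muln_gt0 hq1.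
move: e1 e2; rewrite -(prednK hQ) /= h1 h2 /= => -> [] //.
Qed.


Definition dlt (V E A : finType) (s t : E -> V) (L : E -> A) (S : {set V}) (a : A) : {set V} :=
  [set t e | e : E & (s e \in S) && (L e == a)].

Definition step (V E A : finType) (s t : E -> V) (L : E -> A) (a : A) (v : V) : option V :=
  omap t [pick e | (s e == v) && (L e == a)].

Fixpoint gw (V E A : finType) (s t : E -> V) (L : E -> A) (ws : seq A) (v : V) : option V :=
  match ws with [::] => Some v | a :: ws' => obind (gw s t L ws') (step s t L a v) end.

Fixpoint epath (V E : finType) (s t : E -> V) (v : V) (c : seq E) (v' : V) : bool :=
  match c with [::] => v == v' | e :: c' => (s e == v) && epath s t (t e) c' v' end.

Fixpoint hpath (V E A : finType) (s t : E -> V) (L : E -> A) (S : {set V})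
  (ws : seq (A * {set V})) : bool :=
  match ws with [::] => true | (a, S') :: ws' => ssc_edge s t L S a S' && hpath s t L S' ws' end.

Definition hlast (V A : finType) (S : {set V}) (ws : seq (A * {set V})) := last S (map snd ws).

Lemma step_edge (V E A : finType) (s t : E -> V) (L : E -> A) :
  right_resolving s L -> forall e, step s t L (L e) (s e) = Some (t e).
Proof.
move=> Hrr e; rewrite /step; case: pickP => [e' /andP [/eqP h1 /eqP h2] | /(_ e)].
  by rewrite (Hrr e' e).
by rewrite !eqxx.
Qed.

Lemma gw_cat (V E A : finType) (s t : E -> V) (L : E -> A) w1 w2 v :
  gw s t L (w1 ++ w2) v = obind (gw s t L w2) (gw s t L w1 v).
Proof.
elim: w1 v => [|a w1 IH] v //=.
by case: (step s t L a v) => //= z.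
Qed.

Lemma gw_nseq (V E A : finType) (s t : E -> V) (L : E -> A) Z q v :
  gw s t L (flatten (nseq q Z)) v = it (gw s t L Z) q v.
Proof.
elim: q v => [|q IH] v //=.
rewrite gw_cat; case: (gw s t L Z v) => //= z.
Qed.

Lemma gw_path (V E A : finType) (s t : E -> V) (L : E -> A) (a0 : A) :
  right_resolving s L ->
  forall ws (k : int -> E) (i0 : int),
  (forall r, (r < size ws)%N -> t (k (i0 + r%:Z)) = s (k (i0 + r%:Z + 1))) ->
  (forall r, (r < size ws)%N -> L (k (i0 + r%:Z)) = nth a0 ws r) ->
  gw s t L ws (s (k i0)) = Some (s (k (i0 + (size ws)%:Z))).
Proof.
move=> Hrr; elim=> [|a ws IH] k i0 he hl /=; first by rewrite addr0.
have ha := hl 0%N erefl; rewrite /= addr0 in ha.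
have he0 := he 0%N erefl; rewrite addr0 in he0.
rewrite -ha step_edge //= he0.
have -> : i0 + (size ws).+1%:Z = (i0 + 1) + (size ws)%:Z by lia.
apply: IH => r hr.
- have := he r.+1 hr; have -> : i0 + r.+1%:Z = i0 + 1 + r%:Z by lia. by [].
- have := hl r.+1 hr; have -> : i0 + r.+1%:Z = i0 + 1 + r%:Z by lia. by [].
Qed.

Lemma gw_epath (V E A : finType) (s t : E -> V) (L : E -> A) ws v v' :
  gw s t L ws v = Some v' -> exists c, epath s t v c v' /\ map L c = ws.
Proof.
elim: ws v => [|a ws IH] v /=.
  by move=> [<-]; exists [::]; rewrite /= eqxx.
rewrite /step; case: pickP => [e /andP [/eqP h1 /eqP h2] | _] //= /IH [c [hc hm]].
by exists (e :: c); rewrite /= h1 eqxx hc h2 hm.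
Qed.

Lemma epath_nth (V E : finType) (s t : E -> V) (e0 : E) v c v' :
  epath s t v c v' ->
  (forall r, (r.+1 < size c)%N -> t (nth e0 c r) = s (nth e0 c r.+1)) /\
  ((0 < size c)%N -> s (nth e0 c 0) = v /\ t (nth e0 c (size c).-1) = v').
Proof.
elim: c v => [|e c IH] v //= /andP [/eqP h1 hc].
have [IH1 IH2] := IH _ hc.
split.
- case=> [|r] hr /=.
  + by case: c {IH} hc {IH1 IH2} hr => [|e' c] //= /andP [/eqP ->].
  + exact: IH1.
- move=> _; split => //.
  case: c {IH} hc IH1 IH2 => [|e' c] hc IH1 IH2 /=; first by move/eqP: hc.
  by have [_ ->] := IH2 erefl.
Qed.

Lemma periodic_path (V E : finType) (s t : E -> V) (e0 : E) f c (b : int) :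
  epath s t f c f -> (0 < size c)%N ->
  forall i : int, t (nth e0 c (absz ((i - b) %% (size c)%:Z)%Z)) =
                  s (nth e0 c (absz ((i + 1 - b) %% (size c)%:Z)%Z)).
Proof.
move=> hc hp i.
have [h1 h2] := epath_nth e0 hc.
have hlt := mod_lt (i - b) hp.
have -> : i + 1 - b = (i - b) + 1 by lia.
rewrite modS_lemma //.
case: eqP => h.
- have -> : absz ((i - b) %% (size c)%:Z)%Z = (size c).-1 by lia.
  by have [-> ->] := h2 hp.
- apply: h1; lia.
Qed.

Lemma hpath_cat (V E A : finType) (s t : E -> V) (L : E -> A) S w1 w2 :
  hpath s t L S (w1 ++ w2) = hpath s t L S w1 && hpath s t L (hlast S w1) w2.
Proof.
elim: w1 S => [|[a S'] w1 IH] S //=.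
by rewrite IH andbA.
Qed.

Lemma hlast_cat (V A : finType) (S : {set V}) (w1 w2 : seq (A * {set V})) :
  hlast S (w1 ++ w2) = hlast (hlast S w1) w2.
Proof. by rewrite /hlast map_cat last_cat. Qed.

Lemma hpath_nseq (V E A : finType) (s t : E -> V) (L : E -> A) S Hc q :
  hpath s t L S Hc -> hlast S Hc = S ->
  hpath s t L S (flatten (nseq q Hc)) /\ hlast S (flatten (nseq q Hc)) = S.
Proof.
move=> hp hl; elim: q => [|q [IH1 IH2]] //=.
by rewrite hpath_cat hlast_cat hl hp IH1 IH2.
Qed.

Lemma flatten_nseqS (T : Type) (Z : seq T) q :
  flatten (nseq q.+1 Z) = flatten (nseq q Z) ++ Z.
Proof.
elim: q => [|q IH]; first by rewrite /= cats0.
change (Z ++ flatten (nseq q.+1 Z) = flatten (nseq q.+1 Z) ++ Z).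
by rewrite {1}IH catA.
Qed.

Lemma hpath_surj (V E A : finType) (s t : E -> V) (L : E -> A) :
  right_resolving s L ->
  forall ws S x, hpath s t L S ws -> x \in hlast S ws ->
  exists2 x', x' \in S & gw s t L (map fst ws) x' = Some x.
Proof.
move=> Hrr; elim=> [|[a S1] ws IH] S x /=; first by move=> _ hx; exists x.
case/andP => /andP [_ /eqP hS1] hp hx.
have [x1 hx1 hg] := IH _ _ hp hx.
move: hx1; rewrite hS1 => /imsetP [e]; rewrite inE => /andP [hse /eqP hle] hx1.
exists (s e) => //.
by rewrite -hle step_edge //= -hx1.
Qed.

Lemma F_step (V E A : finType) (s t : E -> V) (L : E -> A) :
  right_resolving s L ->
  forall (y : int -> A) (i : int), F_set s t L y (i + 1) = dlt s t L (F_set s t L y i) (y i).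
Proof.
move=> Hrr y i; apply/setP => v; rewrite inE; apply/asboolP/imsetP.
- move=> [k [hk [hl hv]]]; exists (k i).
    rewrite !inE hl eqxx andbT; apply/asboolP; by exists k.
  by rewrite -hv hk.
- move=> [e]; rewrite !inE => /andP [/asboolP [k [hk [hl hv]]] /eqP hle] ->.
  have eki : k i = e by apply: Hrr => //; rewrite hl hle.
  exists k; split => //; split => //; by rewrite -hk eki.
Qed.

Lemma F_edge (V E A : finType) (s t : E -> V) (L : E -> A) :
  right_resolving s L ->
  forall (y : int -> A) (i : int), ssc_edge s t L (F_set s t L y i) (y i) (F_set s t L y (i + 1)).
Proof.
move=> Hrr y i; apply/andP; split; last by rewrite F_step // eqxx.
apply/subsetP => v; rewrite inE => /asboolP [k [hk [hl hv]]].
apply/imsetP; exists (k i) => //; by rewrite inE hl.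
Qed.

Lemma F_path (V E A : finType) (s t : E -> V) (L : E -> A) (a0 : A) :
  right_resolving s L ->
  forall (y : int -> A) ws S b, F_set s t L y b = S -> hpath s t L S ws ->
  (forall r, (r < size ws)%N -> y (b + r%:Z) = nth a0 (map fst ws) r) ->
  F_set s t L y (b + (size ws)%:Z) = hlast S ws.
Proof.
move=> Hrr y; elim=> [|[a S'] ws IH] S b hb /=; first by rewrite addr0.
case/andP => /andP [_ /eqP hS'] hp hl.
have ha := hl 0%N erefl; rewrite /= addr0 in ha.
have -> : b + (size ws).+1%:Z = (b + 1) + (size ws)%:Z by lia.
apply: IH => //.
  by rewrite F_step // hb ha hS'.
move=> r hr; have := hl r.+1 hr; have -> : b + r.+1%:Z = b + 1 + r%:Z by lia. by [].
Qed.

Definition mkH (V A : finType) (st : int -> {set V}) (lab : int -> A) (b : int) (m : nat) :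
  seq (A * {set V}) := [seq (lab (b + r%:Z), st (b + r%:Z + 1)) | r <- iota 0 m].

Lemma mkH_S (V A : finType) (st : int -> {set V}) (lab : int -> A) b m :
  mkH st lab b m.+1 = (lab b, st (b + 1)) :: mkH st lab (b + 1) m.
Proof.
rewrite /mkH /= addr0; congr (_ :: _).
rewrite -[1%N]/(1 + 0)%N iotaDl -map_comp; apply: eq_map => r /=.
by have -> : b + (1 + r)%N%:Z = b + 1 + r%:Z by lia.
Qed.

Lemma mkH_path (V E A : finType) (s t : E -> V) (L : E -> A) (st : int -> {set V}) (lab : int -> A) m :
  forall b, (forall r, (r < m)%N -> ssc_edge s t L (st (b + r%:Z)) (lab (b + r%:Z)) (st (b + r%:Z + 1))) ->
  hpath s t L (st b) (mkH st lab b m) /\ hlast (st b) (mkH st lab b m) = st (b + m%:Z).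
Proof.
elim: m => [|m IH] b h; first by rewrite /= addr0.
rewrite mkH_S /=.
have h0 := h 0%N erefl; rewrite addr0 in h0.
have [IH1 IH2] : hpath s t L (st (b + 1)) (mkH st lab (b + 1) m) /\
               hlast (st (b + 1)) (mkH st lab (b + 1) m) = st (b + 1 + m%:Z).
  apply: IH => r hr; have := h r.+1 hr; have -> : b + r.+1%:Z = b + 1 + r%:Z by lia. by [].
rewrite h0 IH1; split => //.
move: IH2; rewrite /hlast /= => ->; congr st; lia.
Qed.

Lemma mkH_size (V A : finType) (st : int -> {set V}) (lab : int -> A) b m :
  size (mkH st lab b m) = m.
Proof. by rewrite /mkH size_map size_iota. Qed.

Lemma mkH_nth (V A : finType) (st : int -> {set V}) (lab : int -> A) b m a0 r :
  (r < m)%N -> nth a0 (map fst (mkH st lab b m)) r = lab (b + r%:Z).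
Proof.
move=> hr; rewrite /mkH -map_comp (nth_map 0%N) ?size_iota //= nth_iota //.
Qed.


Fixpoint Bset (V E A : finType) (s t : E -> V) (L : E -> A) (y : int -> A) (j : int) (n : nat)
  : {set V} :=
  match n with 0 => setT | n'.+1 => dlt s t L (Bset s t L y (j - 1) n') (y (j - 1)) end.

Lemma dlt_mono (V E A : finType) (s t : E -> V) (L : E -> A) (S S' : {set V}) (a : A) :
  S \subset S' -> dlt s t L S a \subset dlt s t L S' a.
Proof.
move=> hS; apply/subsetP => v /imsetP [e]; rewrite inE => /andP [he hl] ->.
apply/imsetP; exists e => //; by rewrite inE (subsetP hS _ he) hl.
Qed.

Lemma Bset_decr (V E A : finType) (s t : E -> V) (L : E -> A) y n :
  forall j, Bset s t L y j n.+1 \subset Bset s t L y j n.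
Proof.
elim: n => [|n IH] j; first exact: subsetT.
rewrite /=; apply: dlt_mono; exact: IH.
Qed.

Lemma Bset_mono (V E A : finType) (s t : E -> V) (L : E -> A) y j n m :
  (n <= m)%N -> Bset s t L y j m \subset Bset s t L y j n.
Proof.
move/subnKC <-; elim: (m - n)%N => [|d IH]; first by rewrite addn0.
by rewrite addnS; apply: subset_trans IH; apply: Bset_decr.
Qed.

Lemma Bset_stab (V E A : finType) (s t : E -> V) (L : E -> A) y j :
  exists n0, forall n, (n0 <= n)%N -> Bset s t L y j n = Bset s t L y j n0.
Proof.
have ex : exists c, `[< exists n, #|Bset s t L y j n| = c >].
  by exists #|Bset s t L y j 0|; apply/asboolP; exists 0%N.
case: (ex_minnP ex) => c /asboolP [n0 hn0] hmin.
exists n0 => n hn; apply/eqP; rewrite eqEcard Bset_mono //= hn0.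
by apply: hmin; apply/asboolP; exists n.
Qed.

Definition Inf (V E A : finType) (s t : E -> V) (L : E -> A) y j v :=
  forall n, v \in Bset s t L y j n.

Lemma Inf_pred (V E A : finType) (s t : E -> V) (L : E -> A) y j v :
  Inf s t L y j v -> exists e, [/\ t e = v, L e = y (j - 1) & Inf s t L y (j - 1) (s e)].
Proof.
move=> hv.
have [n1 hn1] := Bset_stab s t L y (j - 1).
have := hv n1.+1; rewrite /= => /imsetP [e]; rewrite inE => /andP [hse /eqP hle] ->.
exists e; split => // n.
case: (leqP n1 n) => h; first by rewrite hn1.
exact: (subsetP (Bset_mono s t L y (j - 1) (ltnW h))).
Qed.

Fixpoint back (V E : finType) (s : E -> V) (pre : int * V -> E) (M : int) (v : V) (m : nat) : V :=
  match m with 0 => v | m'.+1 => s (pre (M - m'%:Z, back s pre M v m')) end.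

Lemma lemmaK (V E A : finType) (s t : E -> V) (L : E -> A) (y : int -> A) (M : int) :
  exists n0 : nat, forall k : int -> E,
    (forall i, M - n0%:Z <= i -> t (k i) = s (k (i + 1))) ->
    (forall i, M - n0%:Z <= i -> L (k i) = y i) ->
    s (k M) \in F_set s t L y M.
Proof.
have [n0 hn0] := Bset_stab s t L y M.
exists n0 => k hk hl.
have fw : forall m, (m <= n0)%N -> s (k (M - n0%:Z + m%:Z)) \in Bset s t L y (M - n0%:Z + m%:Z) m.
  elim=> [|m IH] hm; first by rewrite inE.
  rewrite /=.
  have -> : M - n0%:Z + m.+1%:Z - 1 = M - n0%:Z + m%:Z by lia.
  apply/imsetP; exists (k (M - n0%:Z + m%:Z)).
    rewrite inE IH ?(ltnW hm) // hl //; [by rewrite eqxx | lia].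
  rewrite hk; last lia.
  by have -> : M - n0%:Z + m.+1%:Z = M - n0%:Z + m%:Z + 1 by lia.
set v := s (k M).
have hv : Inf s t L y M v.
  move=> n; have := fw n0 (leqnn _).
  have -> : M - n0%:Z + n0%:Z = M by lia.
  move=> h; case: (leqP n0 n) => hn; first by rewrite hn0.
  exact: (subsetP (Bset_mono s t L y M (ltnW hn))).
have H : forall ji : int * V, exists e : E, Inf s t L y ji.1 ji.2 ->
    [/\ t e = ji.2, L e = y (ji.1 - 1) & Inf s t L y (ji.1 - 1) (s e)].
  move=> [j x]; case: (pselect (Inf s t L y j x)) => h.
    by have [e he] := Inf_pred h; exists e.
  by exists (k M).
case: (choice H) => pre hpre.
pose w := back s pre M v.
have winf : forall m, Inf s t L y (M - m%:Z) (w m).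
  elim=> [|m IH]; first by rewrite subr0.
  have [_ _ h] := hpre ((M - m%:Z)%R, w m) IH.
  by have -> : M - m.+1%:Z = M - m%:Z - 1 by lia.
pose ks := fun i : int => if M <= i then k i else pre ((M - Posz (absz (M - 1 - i)%R))%R, w (absz (M - 1 - i)%R)).
rewrite inE; apply/asboolP; exists ks; split; last split.
- move=> i; rewrite /ks.
  case: (lerP M i) => hi.
    have -> : M <= i + 1 by lia.
    apply: hk; lia.
  have [ht _ _] := hpre ((M - Posz (absz (M - 1 - i)%R))%R, w (absz (M - 1 - i)%R)) (winf (absz (M - 1 - i)%R)); rewrite /= in ht.
  rewrite ht.
  case: (lerP M (i + 1)) => hi1.
    have -> : absz (M - 1 - i)%R = 0%N by lia.
    rewrite /= /v; congr (s (k _)); lia.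
  have -> : absz (M - 1 - i)%R = (absz (M - 1 - (i + 1))%R).+1 by lia.
  by [].
- move=> i; rewrite /ks.
  case: (lerP M i) => hi; first by apply: hl; lia.
  have [_ hl' _] := hpre ((M - Posz (absz (M - 1 - i)%R))%R, w (absz (M - 1 - i)%R)) (winf (absz (M - 1 - i)%R)); rewrite /= in hl'.
  rewrite hl'; congr y; lia.
- by rewrite /ks lexx.
Qed.


Definition yprime (A : Type) (a0 : A) (Zw : seq A) (base : int) (y : int -> A) (M : int) (i : int) : A :=
  if i < base + (size Zw)%:Z then nth a0 Zw (absz ((i - base) %% (size Zw)%:Z)%Z)
  else y (i - (base + (size Zw)%:Z) + M).

Lemma yprime_lo (A : Type) (a0 : A) Zw base y M (r : nat) :
  (r < size Zw)%N -> yprime a0 Zw base y M (base + r%:Z) = nth a0 Zw r.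
Proof.
move=> hr; rewrite /yprime.
have -> : base + r%:Z < base + (size Zw)%:Z by lia.
congr nth.
have -> : base + r%:Z - base = r%:Z - (0 * size Zw)%N%:Z by rewrite mul0n subr0; lia.
exact: mod_shift.
Qed.

Lemma yprime_lo2 (A : Type) (a0 : A) Zw base y M (r j : nat) :
  (r < size Zw)%N ->
  yprime a0 Zw base y M (base + (size Zw)%:Z - (j.+1 * size Zw)%N%:Z + r%:Z) = nth a0 Zw r.
Proof.
move=> hr; rewrite /yprime.
have -> : base + (size Zw)%:Z - (j.+1 * size Zw)%N%:Z + r%:Z < base + (size Zw)%:Z.
  rewrite mulSn PoszD; lia.
congr nth.
have -> : base + (size Zw)%:Z - (j.+1 * size Zw)%N%:Z + r%:Z - base = r%:Z - (j * size Zw)%N%:Z.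
  rewrite mulSn PoszD; lia.
exact: mod_shift.
Qed.

Lemma yprime_hi (A : Type) (a0 : A) Zw base y M (i : int) :
  base + (size Zw)%:Z <= i -> yprime a0 Zw base y M i = y (i - (base + (size Zw)%:Z) + M).
Proof. by move=> h; rewrite /yprime ltNge h. Qed.

Lemma C1 (V E A : finType) (s t : E -> V) (L : E -> A) (Hrr : right_resolving s L)
  (y : int -> A) (M : int) (n0 : nat)
  (HK : forall k : int -> E,
    (forall i, M - n0%:Z <= i -> t (k i) = s (k (i + 1))) ->
    (forall i, M - n0%:Z <= i -> L (k i) = y i) ->
    s (k M) \in F_set s t L y M)
  (Zw : seq A) (a0 : A) (base : int)
  (Hp : (0 < size Zw)%N) (Hn0 : (n0 <= size Zw)%N)
  (Hsuf : forall r, (r < n0)%N -> nth a0 Zw (size Zw - n0 + r) = y (M - n0%:Z + r%:Z))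
  (Hper : forall f, f \in F_set s t L y M -> gw s t L Zw f = Some f) :
  (forall f, f \in F_set s t L y M -> f \in F_set s t L (yprime a0 Zw base y M) base) /\
  (forall v, v \in F_set s t L (yprime a0 Zw base y M) base -> v \in F_set s t L y M).
Proof.
set p := size Zw. set T := base + p%:Z. set y' := yprime a0 Zw base y M.
split.
- move=> f hf.
  have [c [hc hmc]] := gw_epath (Hper f hf).
  have hsc : size c = p by rewrite -(size_map L) hmc.
  move: (hf); rewrite inE => /asboolP [k' [hk' [hl' hv']]].
  pose e0 := k' M.
  pose kf := fun i : int => if i < T then nth e0 c (absz ((i - base) %% (size c)%:Z)%Z)
                            else k' (i - T + M).
  rewrite inE; apply/asboolP; exists kf; split; last split.
  + move=> i; rewrite /kf.
    case: (ltrP (i + 1) T) => h1.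
      have -> : i < T by lia.
      have hcp : (0 < size c)%N by rewrite hsc.
      exact: (periodic_path e0 base hc hcp i).
    case: (ltrP i T) => h2.
      have hcp : (0 < size c)%N by rewrite hsc.
      have [_ h2'] := epath_nth e0 hc.
      have -> : absz ((i - base) %% (size c)%:Z)%Z = (size c).-1.
        have -> : i - base = (size c).-1%:Z - (0 * size c)%N%:Z by rewrite mul0n subr0; lia.
        by rewrite mod_shift // prednK.
      have [_ ->] := h2' hcp.
      by rewrite -hv'; congr (s (k' _)); lia.
    by rewrite hk'; congr (s (k' _)); lia.
  + move=> i; rewrite /kf /y' /yprime -/T.
    case: (ltrP i T) => h; last by rewrite hl'.
    have hlt := mod_lt (i - base) Hp.
    rewrite hsc; move: hlt; set r := absz _ => hlt.
    by rewrite -[in RHS]hmc (nth_map e0) // hsc.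
  + rewrite /kf ifT; last by rewrite /T; lia.
    have hcp : (0 < size c)%N by rewrite hsc.
    have [_ h2'] := epath_nth e0 hc.
    have [<- _] := h2' hcp.
    congr (s (nth e0 c _)).
    by rewrite subrr mod0z.
- move=> v; rewrite inE => /asboolP [k [hk [hl hv]]].
  pose vs := fun j : nat => s (k (T - (j * p)%N%:Z)).
  have hstep : forall j, gw s t L Zw (vs j.+1) = Some (vs j).
    move=> j; rewrite /vs.
    have := @gw_path _ _ _ s t L a0 Hrr Zw k (T - (j.+1 * p)%N%:Z) _ _.
    have -> : T - (j.+1 * p)%N%:Z + (size Zw)%:Z = T - (j * p)%N%:Z by rewrite mulSn PoszD; lia.
    apply.
      by move=> r _; apply: hk.
    move=> r hr; rewrite hl /y' /T.
    exact: yprime_lo2.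
  have h0 : vs 0%N \in F_set s t L y M.
    rewrite /vs mul0n subr0.
    have := HK (fun i => k (i + (T - M))).
    have -> : M + (T - M) = T by lia.
    apply.
      by move=> i _; rewrite hk; congr (s (k _)); lia.
    move=> i hi; rewrite hl /y'.
    case: (lerP M i) => h.
      rewrite yprime_hi -/p -/T; last lia.
      congr y; lia.
    have -> : i + (T - M) = base + (p - n0 + absz (i - (M - n0%:Z))%R)%N%:Z.
      rewrite /T; lia.
    rewrite yprime_lo; last by lia.
    rewrite Hsuf; last by lia.
    congr y; lia.
  have [q hq hpq] := periodic_seq (fun j => hstep j.+1).
  have hp0 : it (gw s t L Zw) 1 (vs 0%N) = Some (vs 0%N) by rewrite /= Hper.
  have [hq1 _] := andP hq.
  have e := periodic_uniq (hstep 0%N) (Hper _ h0) hq1 (ltn0Sn 0) hpq hp0.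
  move: e; rewrite /vs mul1n /T addrK hv => ->.
  by [].
Qed.


Ltac plia := repeat (match goal with H : ?T |- _ => lazymatch type of T with Prop => clear H end end); lia.

Lemma conn_hpath (V E A : finType) (s t : E -> V) (L : E -> A) X Y :
  connect (ssc_adj s t L) X Y -> exists ws, hpath s t L X ws /\ hlast X ws = Y.
Proof.
case/connectP => p; elim: p X => [|Z p IH] X /=; first by move=> _ ->; exists [::].
case/andP => /existsP [a /and3P [_ _ he]] hp hY.
have [ws [h1 h2]] := IH _ hp hY.
by exists ((a, Z) :: ws); rewrite /= he h1.
Qed.

Theorem lemma4p4 (V E A : finType) (s t : E -> V) (L : E -> A)
  (Hsinks : no_sinks s) (Hsources : no_sources t)
  (Hrr : right_resolving s L)
  (C : {set {set V}}) (HC : is_component s t L C)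
  (y : int -> A) (Hy : in_Y s t L y)
  (Hasym : backward_asymptotic s t L (beta s t L y) C) :
  forall u : int -> ssc_edgeT V A,
    X_C s t L C u -> in_closure s t L (beta_image s t L) u.
Proof.
move=> u [hu1 hu2].
split.
  split => // i; by case/and3P: (hu1 i).
move=> n.
case: Hy => x0 [hx0 hlx0].
case: Hasym => u' [N0 [[hu'1 hu'2] hbu]].
case: HC => F0 [hF0 hC].
have FinC : forall i, i <= N0 -> F_set s t L y i \in C.
  move=> i hi; case/and3P: (hu'1 i) => _ h _; by rewrite -(hbu i hi) in h.
have conn : forall X Y, X \in C -> Y \in C -> connect (ssc_adj s t L) X Y.
  move=> X Y; rewrite hC !inE => /and3P [_ _ hX] /and3P [_ hY _]; exact: connect_trans hX hY.
set M := N0.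
have [n0 HK] := lemmaK s t L y M.
set FM := F_set s t L y M.
have FMC : FM \in C := FinC M (lexx _).
set M'' := M - n0%:Z.
have FM''C : F_set s t L y M'' \in C by apply: FinC; rewrite /M''; plia.
set G := ssc_src (u (- n%:Z)).
have GC : G \in C by case/and3P: (hu1 (- n%:Z)).
set G' := ssc_src (u (n%:Z + 1)).
have G'C : G' \in C by case/and3P: (hu1 (n%:Z + 1)).
have [H1 [hH1 lH1]] := conn_hpath (conn _ _ FMC GC).
have [H2 [hH2 lH2]] := conn_hpath (conn _ _ G'C FM''C).
pose Hu := mkH (fun i => ssc_src (u i)) (fun i => ssc_lab (u i)) (- n%:Z) (2 * n).+1.
have [hHu lHu] : hpath s t L G Hu /\ hlast G Hu = ssc_src (u (- n%:Z + (2 * n).+1%:Z)).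
  apply: mkH_path => r _.
  case/and3P: (hu1 (- n%:Z + r%:Z)) => /and3P [_ _ he] _ _.
  by rewrite -hu2.
have e1 : - n%:Z + (2 * n).+1%:Z = n%:Z + 1 by plia.
rewrite e1 in lHu.
pose HL := mkH (F_set s t L y) y M'' n0.
have [hHL lHL] : hpath s t L (F_set s t L y M'') HL /\ hlast (F_set s t L y M'') HL = F_set s t L y (M'' + n0%:Z).
  apply: mkH_path => r _; exact: F_edge.
have e2 : M'' + n0%:Z = M by rewrite /M''; plia.
rewrite e2 in lHL.
pose Hc := H1 ++ Hu ++ H2 ++ HL.
have hHc : hpath s t L FM Hc.
  by rewrite /Hc hpath_cat hH1 lH1 hpath_cat hHu lHu hpath_cat hH2 lH2 hHL.
have lHc : hlast FM Hc = FM by rewrite /Hc !hlast_cat lH1 lHu lH2 lHL.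
pose Z := map fst Hc.
pose Q := (#|V|)`!.
have Hper0 : forall f, f \in FM -> it (gw s t L Z) Q f = Some f.
  move=> f hf.
  have hpre : forall x, exists x', x \in FM -> x' \in FM /\ gw s t L Z x' = Some x.
    move=> x; case: (pselect (x \in FM)) => hx; last by exists x.
    have hx' : x \in hlast FM Hc by rewrite lHc.
    have [x' h1 h2] := hpath_surj Hrr hHc hx'.
    by exists x'.
  case: (choice hpre) => pre hpre'.
  pose w := fun j => iter j pre f.
  have winF : forall j, w j \in FM.
    by elim=> [|j IH] //=; have [] := hpre' _ IH.
  have hw : forall j, gw s t L Z (w j.+1) = Some (w j).
    by move=> j; have [] := hpre' _ (winF j).
  have [q hq hpq] := periodic_seq hw.
  have hdiv : (q %| Q)%N by apply: dvdn_fact.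
  rewrite -(divnK hdiv) mulnC; exact: iter_period.
pose Hbig := flatten (nseq Q Hc).
pose Zw := map fst Hbig.
have hZw : Zw = flatten (nseq Q Z) by rewrite /Zw /Hbig map_flatten map_nseq.
have Hper : forall f, f \in FM -> gw s t L Zw f = Some f.
  by move=> f hf; rewrite hZw gw_nseq Hper0.
pose Hrest := flatten (nseq Q.-1 Hc).
have eHbig : Hbig = Hrest ++ Hc by rewrite /Hbig /Hrest -flatten_nseqS prednK // fact_gt0.
have [hrest lrest] := hpath_nseq Q.-1 hHc lHc.
pose P0 := (size Hrest + size H1)%N.
have eZw : Zw = map fst (Hrest ++ H1) ++ map fst Hu ++ map fst H2 ++ map fst HL.
  by rewrite /Zw eHbig /Hc !catA !map_cat.
have sHu : size Hu = (2 * n).+1 by rewrite mkH_size.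
have sHL : size HL = n0 by rewrite mkH_size.
have sZw : size Zw = (P0 + (2 * n).+1 + size H2 + n0)%N.
  rewrite eZw !size_cat !size_map !size_iota size_cat /P0; plia.
pose a0 := y 0.
pose base := - n%:Z - P0%:Z.
pose y' := yprime a0 Zw base y M.
have Hp : (0 < size Zw)%N by rewrite sZw; plia.
have Hn0 : (n0 <= size Zw)%N by rewrite sZw; plia.
have Hsuf : forall r, (r < n0)%N -> nth a0 Zw (size Zw - n0 + r) = y (M - n0%:Z + r%:Z).
  move=> r hr.
  have -> : (size Zw - n0 + r = P0 + (2 * n).+1 + size H2 + r)%N by rewrite sZw; plia.
  have -> : Zw = (map fst (Hrest ++ H1) ++ map fst Hu ++ map fst H2) ++ map fst HL by rewrite eZw !catA.
  have sX : size (map fst (Hrest ++ H1) ++ map fst Hu ++ map fst H2) = (P0 + (2 * n).+1 + size H2)%N.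
    rewrite !size_cat !size_map !size_iota size_cat /P0; plia.
  rewrite nth_cat sX ifF; last plia.
  rewrite mkH_nth; last by move: hr; plia.
  congr y; rewrite /M''; plia.
have [C1a C1b] := C1 Hrr HK (Zw := Zw) (a0 := a0) base Hp Hn0 Hsuf Hper.
have FB : F_set s t L y' base = FM.
  by apply/setP => v; apply/idP/idP => [/C1b | /C1a].
have inY : in_Y s t L y'.
  have : s (x0 M) \in FM by rewrite inE; apply/asboolP; exists x0; split => //; split => // j; rewrite hlx0.
  rewrite -FB inE => /asboolP [k [hk [hl _]]].
  by exists k; split => // i; rewrite hl.
have ylo : forall r, (r < size Zw)%N -> y' (base + r%:Z) = nth a0 Zw r.
  by move=> r hr; apply: yprime_lo.
have FG : F_set s t L y' (- n%:Z) = G.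
  have := F_path Hrr (_ : F_set s t L y' base = FM) (_ : hpath s t L FM (Hrest ++ H1)) (_ : forall r, (r < size (Hrest ++ H1))%N -> y' (base + r%:Z) = nth a0 (map fst (Hrest ++ H1)) r).
  rewrite hlast_cat lrest lH1 size_cat.
  have -> : base + (size Hrest + size H1)%N%:Z = - n%:Z by rewrite /base /P0; plia.
  apply => //.
  - by rewrite hpath_cat /Hrest hrest lrest hH1.
  - move=> r hr; rewrite ylo; last by rewrite sZw; move: hr; rewrite /P0; plia.
    by rewrite eZw nth_cat size_map size_cat hr.
have ylab : forall r, (r <= 2 * n)%N -> y' (- n%:Z + r%:Z) = ssc_lab (u (- n%:Z + r%:Z)).
  move=> r hr.
  have -> : y' (- n%:Z + r%:Z) = y' (base + (P0 + r)%N%:Z) by congr y'; rewrite /base; plia.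
  rewrite ylo; last by rewrite sZw; move: hr; plia.
  rewrite eZw nth_cat.
  have -> : (P0 + r < size (map fst (Hrest ++ H1)))%N = false by rewrite size_map size_cat /P0; plia.
  have -> : (P0 + r - size (map fst (Hrest ++ H1)) = r)%N by rewrite size_map size_cat /P0; plia.
  rewrite nth_cat size_map sHu ifT; last by move: hr; plia.
  by rewrite mkH_nth //; move: hr; plia.
have Fu : forall m, (m <= (2 * n).+1)%N -> F_set s t L y' (- n%:Z + m%:Z) = ssc_src (u (- n%:Z + m%:Z)).
  elim=> [|m IH] hm; first by rewrite addr0 FG.
  have -> : - n%:Z + m.+1%:Z = (- n%:Z + m%:Z) + 1 by plia.
  rewrite F_step // IH; last by move: hm; plia.
  rewrite ylab; last by move: hm; plia.
  case/and3P: (hu1 (- n%:Z + m%:Z)) => /and3P [_ _ /andP [_ /eqP e]] _ _.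
  by rewrite /dlt -e hu2.
exists (beta s t L y'); split; first by exists y'; split.
move=> i /andP [hi1 hi2].
have [m hm ei] : exists2 m : nat, (m <= 2 * n)%N & i = - n%:Z + m%:Z.
  by exists (absz (i + n%:Z)); move: hi1 hi2; plia.
subst i.
rewrite /beta Fu ?ylab; try by move: hm; plia.
have -> : - n%:Z + m%:Z + 1 = - n%:Z + m.+1%:Z by plia.
rewrite Fu; last by move: hm; plia.
have -> : - n%:Z + m.+1%:Z = - n%:Z + m%:Z + 1 by plia.
rewrite -hu2.
by case: (u _) => [[a b] c].
Qed.
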